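(* Let $\sigma$ be an automorphism of $D$, let $B$ be a subring of $D$ such that $D$ is a free right $B$-module of finite rank, and let $f\in D[t;\sigma,\delta]$ be monic of degree $m\ge2$ and $B$-weak semi-invariant. Then $S_f$ is a division algebra if and only if $f$ is irreducible. In particular, if $\sigma$ is an automorphism of $D$ and $f$ is right semi-invariant, then $S_f$ is a division algebra if and only if $f$ is irreducible.
   Context: $D$ is an associative division ring, $\sigma$ a ring endomorphism of $D$, $\delta$ a left $\sigma$-derivation. $D[t;\sigma,\delta]$ is the skew polynomial ring with $ta=\sigma(a)t+\delta(a)$. For monic $f$ of degree $m$, $S_f$ is the set of polynomials of degree $<m$ with multiplication $g\circ h=$ remainder of $gh$ upon right division by $f$. $f$ is $B$-weak semi-invariant if $fB\subseteq Df$, and right semi-invariant if $fD\subseteq Df$. $f$ is irreducible if it is not a unit and has no factorization $f=gh$ with $\deg g,\deg h<\deg f$. $S_f$ is a division algebra if left and right multiplication by every nonzero element are bijective. *)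

(* Defs.v *)
(* Skew polynomial ring D[t; sigma, delta] over an
   associative division ring D, represented by coefficient sequences
   ({poly D}: p = \sum_i p`_i t^i, coefficients on the LEFT of t^i),
   with a hand-defined skew multiplication obeying t a = sigma(a) t + delta(a). *)
From HB Require Import structures.
From mathcomp Require Import all_boot all_order all_algebra.
Set Implicit Arguments. Unset Strict Implicit. Unset Printing Implicit Defensive.
Import Order.TTheory GRing.Theory.
Local Open Scope ring_scope.

Section Skew.
Variable D : unitRingType.
Variables (sigma delta : D -> D).

Definition division_ring := forall x : D, x != 0 -> x \is a GRing.unit.

Definition left_sigma_derivation :=
  (forall a b : D, delta (a + b) = delta a + delta b) /\
  (forall a b : D, delta (a * b) = sigma a * delta b + delta a * b).

(* left multiplication by t:  t * (\sum a_i t^i) = \sum (sigma(a_i) t^(i+1) + delta(a_i) t^i) *)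
Definition tmul (p : {poly D}) : {poly D} :=
  'X * map_poly sigma p + map_poly delta p.

Definition skew_mul (p q : {poly D}) : {poly D} :=
  \sum_(i < size p) (p`_i)%:P * iter (nat_of_ord i) tmul q.

(* degree, with deg 0 = 0 (irrelevant for the statement since f is monic) *)
Definition sdeg (p : {poly D}) : nat := (size p).-1.

Definition skew_unit (p : {poly D}) :=
  exists u, skew_mul p u = 1 /\ skew_mul u p = 1.

Definition skew_irreducible (f : {poly D}) :=
  ~ skew_unit f /\
  ~ (exists g h, f = skew_mul g h /\ sdeg g < sdeg f /\ sdeg h < sdeg f)%N.

Fixpoint srem_rec (f : {poly D}) (n : nat) (p : {poly D}) : {poly D} :=
  match n with
  | 0 => p
  | n'.+1 =>
      if (size p < size f)%N then p
      else srem_rec f n'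
             (p - skew_mul ((lead_coef p)%:P * 'X^(size p - size f)) f)
  end.

Definition srem (f p : {poly D}) : {poly D} := srem_rec f (size p) p.

Definition sf_mul (f g h : {poly D}) : {poly D} := srem f (skew_mul g h).

Definition in_Sf (f p : {poly D}) : bool := (size p < size f)%N.

Definition Sf_division (f : {poly D}) :=
  forall g, in_Sf f g -> g != 0 ->
    (forall r, in_Sf f r -> exists! h, in_Sf f h /\ sf_mul f g h = r) /\
    (forall r, in_Sf f r -> exists! h, in_Sf f h /\ sf_mul f h g = r).

Definition weak_semi_invariant (B : {pred D}) (f : {poly D}) :=
  forall b, b \in B -> exists d : D, skew_mul f b%:P = skew_mul d%:P f.

Definition right_semi_invariant (f : {poly D}) :=
  forall b : D, exists d : D, skew_mul f b%:P = skew_mul d%:P f.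

Definition free_right_module_finite_rank (B : {pred D}) :=
  exists (n : nat) (e : 'I_n -> D),
    (forall x : D, exists b : 'I_n -> D,
        (forall i, b i \in B) /\ x = \sum_(i < n) e i * b i) /\
    (forall b : 'I_n -> D, (forall i, b i \in B) ->
        \sum_(i < n) e i * b i = 0 -> forall i, b i = 0).

End Skew.

(* Main.v *)
Require Import Defs.
From HB Require Import structures.
From mathcomp Require Import all_boot all_order all_algebra.
From mathcomp Require Import zify.
Unset Printing Implicit Defensive.
Import Order.TTheory GRing.Theory.
Local Open Scope ring_scope.
Section LinAlg.
Variable R : nzRingType.
Variable K : R -> Prop.
Hypothesis K0 : K 0.
Hypothesis K1 : K 1.
Hypothesis KD : forall a b, K a -> K b -> K (a + b).
Hypothesis KN : forall a, K a -> K (- a).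
Hypothesis KM : forall a b, K a -> K b -> K (a * b).
Hypothesis Kinv : forall a, K a -> a != 0 -> exists a', K a' /\ a * a' = 1.

Lemma KB a b : K a -> K b -> K (a - b).
Proof. by move=> ha hb; apply: KD => //; apply: KN. Qed.

Lemma dep_coord N (a : 'I_N.+1 -> 'I_N -> R) : (forall j i, K (a j i)) ->
  exists c : 'I_N.+1 -> R, (forall j, K (c j)) /\ (exists j, c j != 0) /\
    (forall i, \sum_j a j i * c j = 0).
Proof.
elim: N a => [|N IH] a Ka.
  exists (fun _ => 1); split => //; split; first by exists ord0; rewrite oner_neq0.
  by case.
have [k Hk|none] := pickP (fun j : 'I_N.+2 => a j ord_max != 0).
- set p := a k ord_max in Hk.
  have [p' [Kp' pp']] := Kinv _ (Ka _ _) Hk.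
  pose a' := fun (j : 'I_N.+1) (i : 'I_N) =>
    a (lift k j) (lift ord_max i) - a k (lift ord_max i) * p' * a (lift k j) ord_max.
  have Ka' : forall j i, K (a' j i).
    by move=> j i; apply: KB => //; apply: KM => //; apply: KM.
  have [c' [Kc' [[j0 hj0] hs]]] := IH a' Ka'.
  pose c := fun j : 'I_N.+2 => match unlift k j with
    | Some j' => c' j'
    | None => - \sum_(j' < N.+1) p' * a (lift k j') ord_max * c' j' end.
  exists c; split; last split.
  + move=> j; rewrite /c; case: (unlift k j) => [j'|] //.
    apply: KN; apply: (big_ind K) => //; try exact: KD.
    by move=> i _; apply: KM => //; apply: KM.
  + by exists (lift k j0); rewrite /c liftK.
  + move=> i; rewrite (bigD1_ord k) //= /c unlift_none.
    under eq_bigr do rewrite liftK.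
    rewrite mulrN mulr_sumr -sumrN -big_split /=.
    have E : forall j : 'I_N.+1, - (a k i * (p' * a (lift k j) ord_max * c' j)) +
        a (lift k j) i * c' j =
        (a (lift k j) i - a k i * p' * a (lift k j) ord_max) * c' j.
      by move=> j; rewrite mulrBl addrC !mulrA.
    under eq_bigr do rewrite E.
    case: (unliftP ord_max i) => [i' ->|->]; first exact: hs.
    rewrite big1 // => j _.
    by rewrite -/p -[a k ord_max * p']/(p * p') pp' mul1r subrr mul0r.
- pose a' := fun (j : 'I_N.+1) (i : 'I_N) => a (lift ord_max j) (lift ord_max i).
  have [c' [Kc' [[j0 hj0] hs]]] := IH a' (fun j i => Ka _ _).
  pose c := fun j : 'I_N.+2 => match unlift ord_max j with
    | Some j' => c' j'
    | None => 0 end.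
  exists c; split; last split.
  + by move=> j; rewrite /c; case: (unlift ord_max j).
  + by exists (lift ord_max j0); rewrite /c liftK.
  + move=> i; rewrite (bigD1_ord ord_max) //= /c unlift_none mulr0 add0r.
    under eq_bigr do rewrite liftK.
    case: (unliftP ord_max i) => [i' ->|->]; first exact: hs.
    rewrite big1 // => j _.
    by move: (none (lift ord_max j)) => /negbFE /eqP ->; rewrite mul0r.
Qed.

Variable M : zmodType.
Variable act : M -> R -> M.
Hypothesis actDl : forall x y b, act (x + y) b = act x b + act y b.
Hypothesis actDr : forall x b c, act x (b + c) = act x b + act x c.
Hypothesis actM : forall x b c, act x (b * c) = act (act x b) c.
Hypothesis act1 : forall x, act x 1 = x.

Lemma act0l b : act 0 b = 0.
Proof. by apply: (addrI (act 0 b)); rewrite -actDl !addr0. Qed.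
Lemma act0r x : act x 0 = 0.
Proof. by apply: (addrI (act x 0)); rewrite -actDr !addr0. Qed.
Lemma actNl x b : act (- x) b = - act x b.
Proof. by apply/eqP; rewrite -addr_eq0 -actDl addNr act0l. Qed.
Lemma actNr x b : act x (- b) = - act x b.
Proof. by apply/eqP; rewrite -addr_eq0 -actDr addNr act0r. Qed.
Lemma act_suml (I : Type) (r : seq I) (P : pred I) (F : I -> M) b :
  act (\sum_(i <- r | P i) F i) b = \sum_(i <- r | P i) act (F i) b.
Proof. by apply: (big_morph (fun x => act x b)) => [x y|]; rewrite ?actDl ?act0l. Qed.
Lemma act_sumr (I : Type) (r : seq I) (P : pred I) (F : I -> R) x :
  act x (\sum_(i <- r | P i) F i) = \sum_(i <- r | P i) act x (F i).
Proof. by apply: (big_morph (fun b => act x b)) => [b c|]; rewrite ?actDr ?act0r. Qed.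

Lemma inj_surj (I : finType) (u : I -> M) (P : M -> Prop) (phi : M -> M) :
  (forall x, P x -> exists b : I -> R, (forall i, K (b i)) /\ x = \sum_i act (u i) (b i)) ->
  (forall b : I -> R, (forall i, K (b i)) -> \sum_i act (u i) (b i) = 0 -> forall i, b i = 0) ->
  (forall b : I -> R, (forall i, K (b i)) -> P (\sum_i act (u i) (b i))) ->
  (forall x y, phi (x + y) = phi x + phi y) ->
  (forall x b, K b -> phi (act x b) = act (phi x) b) ->
  (forall i, P (phi (u i))) ->
  (forall x, P x -> phi x = 0 -> x = 0) ->
  forall y, P y -> exists x, P x /\ phi x = y.
Proof.
move=> span indep comb phiD phiA Pu inj y Py.
have phi0 : phi 0 = 0 by apply: (addrI (phi 0)); rewrite -phiD !addr0.
have phi_sum : forall (J : Type) (r : seq J) (Q : pred J) (F : J -> M),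
    phi (\sum_(j <- r | Q j) F j) = \sum_(j <- r | Q j) phi (F j).
  by move=> J r Q F; apply: (big_morph phi).
pose N := #|I|.
pose v := fun j : 'I_N.+1 => match unlift ord_max j with
  | Some j' => phi (u (enum_val j'))
  | None => y end.
have Pv : forall j, P (v j) by move=> j; rewrite /v; case: (unlift ord_max j).
have [B HB] : exists B : 'I_N.+1 -> I -> R, forall j,
    (forall i, K (B j i)) /\ v j = \sum_i act (u i) (B j i).
  apply: (@fin_all_exists _ (fun _ => I -> R)
    (fun j b => (forall i, K (b i)) /\ v j = \sum_i act (u i) (b i))).
  by move=> j; apply: span.
have [c [Kc [[j0 hj0] hs]]] := dep_coord N (fun j (i : 'I_N) => B j (enum_val i))
  (fun j i => (HB j).1 _).
have hs' : forall i : I, \sum_j B j i * c j = 0.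
  by move=> i; have := hs (enum_rank i); rewrite enum_rankK.
have Z : \sum_j act (v j) (c j) = 0.
  transitivity (\sum_j \sum_i act (u i) (B j i * c j)).
    apply: eq_bigr => j _; rewrite (HB j).2 act_suml.
    by apply: eq_bigr => i _; rewrite actM.
  rewrite exchange_big /= big1 // => i _.
  by rewrite -act_sumr hs' act0r.
pose c' := fun i : I => c (lift ord_max (enum_rank i)).
have Kc' : forall i, K (c' i) by move=> i; apply: Kc.
pose x0 := \sum_i act (u i) (c' i).
have Px0 : P x0 by apply: comb.
have E1 : act y (c ord_max) + phi x0 = 0.
  rewrite -Z (bigD1_ord ord_max) //= {1}/v unlift_none; congr (_ + _).
  rewrite /x0 phi_sum (big_enum_val (fun i => phi (act (u i) (c' i)))) /=.
  apply: eq_bigr => j _; rewrite /v liftK phiA // /c' enum_valK //.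
have [cm0|cmn] := eqVneq (c ord_max) 0.
  exfalso; move: E1; rewrite cm0 act0r add0r => /(inj _ Px0) /(indep _ Kc') h.
  move: hj0; case: (unliftP ord_max j0) => [j' ->|->]; last by rewrite cm0 eqxx.
  by have := h (enum_val j'); rewrite /c' enum_valK => ->; rewrite eqxx.
have [w [Kw cw]] := Kinv _ (Kc _) cmn.
exists (\sum_i act (u i) (c' i * - w)); split.
  by apply: comb => i; apply: KM => //; apply: KN.
rewrite phi_sum.
transitivity (act (phi x0) (- w)).
  rewrite /x0 phi_sum act_suml; apply: eq_bigr => i _.
  by rewrite !phiA ?actM //; apply: KM => //; apply: KN.
have -> : phi x0 = - act y (c ord_max) by apply/eqP; rewrite -addr_eq0 addrC E1.
by rewrite actNl actNr opprK -actM cw act1.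
Qed.

End LinAlg.

Section SkewTh.
Variable D : unitRingType.
Variable sigma : {rmorphism D -> D}.
Variable delta : D -> D.
Hypothesis Hdiv : division_ring D.
Hypothesis Hder : left_sigma_derivation sigma delta.

Local Notation T := (tmul sigma delta).
Local Notation sm := (skew_mul sigma delta).
Implicit Types (p q r f g h x y d s t : {poly D}) (a b c : D).

Lemma deltaD a b : delta (a + b) = delta a + delta b.
Proof. exact: Hder.1. Qed.
Lemma deltaM a b : delta (a * b) = sigma a * delta b + delta a * b.
Proof. exact: Hder.2. Qed.
Lemma delta0 : delta 0 = 0.
Proof. by apply: (addrI (delta 0)); rewrite -deltaD !addr0. Qed.
Lemma deltaN a : delta (- a) = - delta a.
Proof. by apply: (addrI (delta a)); rewrite -deltaD !subrr delta0. Qed.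
Lemma delta1 : delta 1 = 0.
Proof.
have := deltaM 1 1; rewrite mul1r rmorph1 mul1r mulr1 => h.
by apply: (addrI (delta 1)); rewrite addr0 -h.
Qed.

Lemma coef_mapd p i : (map_poly delta p)`_i = delta p`_i.
Proof. exact: (@coef_map_id0 _ _ delta p i delta0). Qed.

Lemma coefT p i : (T p)`_i = (if i == 0%N then 0 else sigma p`_i.-1) + delta p`_i.
Proof.
rewrite /tmul coefD coefXM coef_mapd.
by case: (i == 0%N) => //; rewrite coef_map.
Qed.

Lemma T_add p q : T (p + q) = T p + T q.
Proof.
apply/polyP => i; rewrite coefT [RHS]coefD !coefT coefD.
rewrite coefD rmorphD deltaD.
by case: (i == 0%N); rewrite ?add0r // addrACA.
Qed.

Lemma T0 : T 0 = 0.
Proof. by apply/polyP => i; rewrite coefT !coef0 rmorph0 delta0 addr0; case: (i == 0%N). Qed.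

Lemma T_opp p : T (- p) = - T p.
Proof.
apply/polyP => i; rewrite coefN !coefT !coefN rmorphN deltaN.
by case: (i == 0%N); rewrite ?add0r ?oppr0 ?add0r // opprD.
Qed.

Lemma T_scale c p : T (c%:P * p) = (sigma c)%:P * T p + (delta c)%:P * p.
Proof.
apply/polyP => i; rewrite coefT [RHS]coefD !coefCM !coefT deltaM rmorphM mulrDr.
by case: (i == 0%N); rewrite ?mulr0 ?add0r // addrA.
Qed.

Lemma T_sum I (r : seq I) (P : pred I) (F : I -> {poly D}) :
  T (\sum_(i <- r | P i) F i) = \sum_(i <- r | P i) T (F i).
Proof. exact: (big_morph T T_add T0). Qed.

Lemma iterT_add n p q : iter n T (p + q) = iter n T p + iter n T q.
Proof. by elim: n => //= n ->; rewrite T_add. Qed.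
Lemma iterT0 n : iter n T 0 = 0.
Proof. by elim: n => //= n ->; rewrite T0. Qed.
Lemma iterT_opp n p : iter n T (- p) = - iter n T p.
Proof. by elim: n => //= n ->; rewrite T_opp. Qed.

Lemma sm_sum n p q : (size p <= n)%N ->
  sm p q = \sum_(i < n) (p`_i)%:P * iter i T q.
Proof.
rewrite /skew_mul; elim: n => [|n IH] le.
  by move: le; rewrite leqn0 => /eqP ->; rewrite !big_ord0.
move: le; rewrite leq_eqVlt => /orP [/eqP -> //|lt].
rewrite big_ord_recr /= -IH // nth_default // mul0r addr0 //.
Qed.

Lemma sm0l q : sm 0 q = 0.
Proof. by rewrite /skew_mul size_poly0 big_ord0. Qed.

Lemma sm_addl p1 p2 q : sm (p1 + p2) q = sm p1 q + sm p2 q.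
Proof.
rewrite !(sm_sum (maxn (size p1) (size p2))) ?leq_maxl ?leq_maxr ?size_polyD //.
by rewrite -big_split; apply: eq_bigr => i _; rewrite coefD polyCD mulrDl.
Qed.

Lemma size_Cmul_le c p : (size (c%:P * p)%R <= size p)%N.
Proof.
apply: (leq_trans (size_polyMleq _ _)); move: (size_polyC_leq1 c).
case: (size (c%:P : {poly D})) => [|[|//]] _; last by rewrite add1n.
by rewrite add0n leq_pred.
Qed.

Lemma sm_scalel c p q : sm (c%:P * p) q = c%:P * sm p q.
Proof.
rewrite !(sm_sum (size p)) ?size_Cmul_le // mulr_sumr.
by apply: eq_bigr => i _; rewrite coefCM polyCM mulrA.
Qed.

Lemma sm_oppl p q : sm (- p) q = - sm p q.
Proof. by apply/eqP; rewrite -addr_eq0 -sm_addl addNr sm0l. Qed.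

Lemma sm_subl p1 p2 q : sm (p1 - p2) q = sm p1 q - sm p2 q.
Proof. by rewrite sm_addl sm_oppl. Qed.

Lemma sm_addr p q1 q2 : sm p (q1 + q2) = sm p q1 + sm p q2.
Proof.
by rewrite /skew_mul -big_split; apply: eq_bigr => i _; rewrite iterT_add mulrDr.
Qed.

Lemma sm0r p : sm p 0 = 0.
Proof. by rewrite /skew_mul big1 // => i _; rewrite iterT0 mulr0. Qed.

Lemma sm_oppr p q : sm p (- q) = - sm p q.
Proof. by apply/eqP; rewrite -addr_eq0 -sm_addr addNr sm0r. Qed.

Lemma sm_subr p q1 q2 : sm p (q1 - q2) = sm p q1 - sm p q2.
Proof. by rewrite sm_addr sm_oppr. Qed.

Lemma sm_suml I (r : seq I) (P : pred I) (F : I -> {poly D}) q :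
  sm (\sum_(i <- r | P i) F i) q = \sum_(i <- r | P i) sm (F i) q.
Proof. by apply: (big_morph (fun p => sm p q)) => [a b|]; rewrite ?sm_addl ?sm0l. Qed.

Lemma sm_sumr I (r : seq I) (P : pred I) (F : I -> {poly D}) p :
  sm p (\sum_(i <- r | P i) F i) = \sum_(i <- r | P i) sm p (F i).
Proof. by apply: (big_morph (fun q => sm p q)) => [a b|]; rewrite ?sm_addr ?sm0r. Qed.

Lemma sm_Xl p q : sm ('X * p) q = sm p (T q).
Proof.
rewrite (sm_sum (size p).+1); last first.
  by apply: (leq_trans (size_polyMleq _ _)); rewrite size_polyX.
rewrite big_ord_recl coefXM eqxx mul0r add0r (sm_sum (size p)) //.
by apply: eq_bigr => i _; rewrite coefXM /= add0n -iterS iterSr.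
Qed.

Lemma sm_Cl c q : sm c%:P q = c%:P * q.
Proof. by rewrite (sm_sum 1) ?size_polyC_leq1 // big_ord1 coefC. Qed.

Lemma sm1l q : sm 1 q = q.
Proof. by rewrite -polyC1 sm_Cl polyC1 mul1r. Qed.

Lemma size_map_le (F : D -> D) p : F 0 = 0 -> (size (map_poly F p) <= size p)%N.
Proof. by move=> F0; apply/leq_sizeP => j le; rewrite coef_map_id0 // nth_default. Qed.

Lemma sm_map (F : D -> D) p q : F 0 = 0 ->
  sm (map_poly F p) q = \sum_(i < size p) (F p`_i)%:P * iter i T q.
Proof.
move=> F0; rewrite (sm_sum (size p)) ?size_map_le //.
by apply: eq_bigr => i _; rewrite coef_map_id0.
Qed.

Lemma sm_Tl q r : sm (T q) r = T (sm q r).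
Proof.
rewrite {1}/tmul sm_addl sm_Xl (@sm_map sigma _ _ (rmorph0 sigma)) (@sm_map delta _ _ delta0).
rewrite [sm q r]/skew_mul T_sum -big_split; apply: eq_bigr => i _.
by rewrite T_scale -iterSr.
Qed.

Lemma sm_iterT n q r : sm (iter n T q) r = iter n T (sm q r).
Proof. by elim: n => //= n IH; rewrite sm_Tl IH. Qed.

Lemma sm_assoc p q r : sm (sm p q) r = sm p (sm q r).
Proof.
rewrite [sm p q]/skew_mul sm_suml [sm p (sm q r)]/skew_mul.
by apply: eq_bigr => i _; rewrite sm_scalel sm_iterT.
Qed.

Lemma T_Xn i : T ('X^i : {poly D}) = 'X^(i.+1).
Proof.
rewrite /tmul map_polyXn exprS.
have -> : map_poly delta 'X^i = 0.
  apply/polyP => j; rewrite coef_mapd coefXn coef0.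
  by case: (j == i); rewrite /= ?delta1 ?delta0.
by rewrite addr0.
Qed.

Lemma iterT1 i : iter i T 1 = 'X^i.
Proof. by elim: i => [|i IH] /=; rewrite ?expr0 // IH T_Xn. Qed.

Lemma sm1r p : sm p 1 = p.
Proof.
rewrite /skew_mul; under eq_bigr do rewrite iterT1 mul_polyC.
by rewrite -poly_def coefK.
Qed.

Lemma sm_Xn k q : sm 'X^k q = iter k T q.
Proof.
elim: k q => [|k IH] q; first by rewrite expr0 sm1l.
by rewrite exprS sm_Xl IH iterSr.
Qed.

Lemma predn_lt n j : (0 < n)%N -> (n.-1 < j)%N -> (n <= j)%N.
Proof. lia. Qed.

Lemma lt_pred n j : (n < j)%N -> (n <= j.-1)%N.
Proof. lia. Qed.
Arguments lt_pred {n j}.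
Arguments predn_lt {n j}.

Lemma unit_neq0 (x : D) : x \is a GRing.unit -> x != 0.
Proof. by apply: contraTneq => ->; rewrite unitr0. Qed.

Lemma sigma_neq0 (x : D) : x != 0 -> sigma x != 0.
Proof. by move=> /Hdiv ux; apply: unit_neq0; rewrite rmorph_unit. Qed.

Lemma iter_sigma_neq0 n (x : D) : x != 0 -> iter n sigma x != 0.
Proof. by move=> nx; elim: n => //= n IH; apply: sigma_neq0. Qed.

Lemma iter_sigma1 n : iter n sigma 1 = 1.
Proof. by elim: n => //= n ->; rewrite rmorph1. Qed.

Lemma mulf_neq0D (x y : D) : x != 0 -> y != 0 -> x * y != 0.
Proof.
move=> /Hdiv ux ny; apply: contraNneq ny => h.
by rewrite -(mulKr ux y) h mulr0.
Qed.

Lemma size_coef n p : p`_n != 0 -> (forall j, (n < j)%N -> p`_j = 0) ->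
  size p = n.+1 /\ lead_coef p = p`_n.
Proof.
move=> pn hj.
have le : (size p <= n.+1)%N by apply/leq_sizeP.
have gt : (n < size p)%N.
  rewrite ltnNge; apply/negP => /leq_sizeP h.
  by rewrite h ?eqxx in pn.
have e : size p = n.+1 by apply/eqP; rewrite eqn_leq le gt.
by split => //; rewrite lead_coefE e.
Qed.

Lemma CmulP c y : c != 0 ->
  size (c%:P * y) = size y /\ lead_coef (c%:P * y) = c * lead_coef y.
Proof.
move=> nc; have [->|ny] := eqVneq y 0; first by rewrite mulr0 lead_coef0 mulr0.
have sy : (0 < size y)%N by rewrite size_poly_gt0.
have := @size_coef (size y).-1 (c%:P * y).
rewrite coefCM -lead_coefE => h; case: h.
- by apply: mulf_neq0D => //; rewrite lead_coef_eq0.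
- by move=> j hj; rewrite coefCM nth_default ?mulr0 //; apply: predn_lt sy hj.
- by move=> -> ->; split => //; rewrite prednK.
Qed.

Lemma size_T q : q != 0 ->
  size (T q) = (size q).+1 /\ lead_coef (T q) = sigma (lead_coef q).
Proof.
move=> nq; have sq : (0 < size q)%N by rewrite size_poly_gt0.
have := @size_coef (size q) (T q).
rewrite coefT (nth_default _ (leqnn _)) delta0 addr0.
have -> : (size q == 0%N) = false by apply/negbTE; rewrite -lt0n.
case.
- by apply: sigma_neq0; rewrite lead_coef_eq0.
- move=> j hj; have h1 : (size q <= j)%N := ltnW hj.
  have h2 : (size q <= j.-1)%N := lt_pred hj.
  rewrite coefT !nth_default // rmorph0 delta0 addr0.
  by case: (j == 0%N).
- by move=> -> ->.
Qed.

Lemma size_iterT k q : q != 0 ->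
  size (iter k T q) = (size q + k)%N /\
  lead_coef (iter k T q) = iter k sigma (lead_coef q).
Proof.
move=> nq; elim: k => [|k [IH1 IH2]] /=; first by rewrite addn0.
have nz : iter k T q != 0.
  by rewrite -size_poly_gt0 IH1; have := size_poly_gt0 q; rewrite nq; lia.
by have [-> ->] := size_T _ nz; rewrite IH1 IH2 addnS.
Qed.

Lemma size_iterT_le k q : (size (iter k T q) <= size q + k)%N.
Proof.
have [->|nq] := eqVneq q 0; first by rewrite iterT0 size_poly0.
by rewrite (size_iterT k _ nq).1.
Qed.

Lemma sm_size p q : p != 0 -> q != 0 ->
  size (sm p q) = (size p + size q).-1 /\
  lead_coef (sm p q) = lead_coef p * iter (size p).-1 sigma (lead_coef q).
Proof.
move=> np nq.
have sp : (0 < size p)%N by rewrite size_poly_gt0.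
have sq : (0 < size q)%N by rewrite size_poly_gt0.
set d := (size p).-1.
have ed : size p = d.+1 by rewrite /d; lia.
rewrite (sm_sum d.+1) ?ed // big_ord_recr /=.
have lp : p`_d = lead_coef p by rewrite lead_coefE.
have nlp : lead_coef p != 0 by rewrite lead_coef_eq0.
have [s1 l1] := size_iterT d _ nq.
have [s2 l2] := CmulP _ (iter d T q) nlp.
rewrite lp.
have hS : (size (\sum_(i < d) (p`_i)%:P * iter i T q)%R < size ((lead_coef p)%:P * iter d T q)%R)%N.
  rewrite s2 s1; apply: (@leq_ltn_trans (size q + d).-1); last by lia.
  apply/leq_sizeP => j hj; rewrite coef_sum big1 // => i _.
  rewrite coefCM [X in _ * X]nth_default ?mulr0 //.
  apply: leq_trans (size_iterT_le i q) _; have := ltn_ord i; lia.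
rewrite addrC size_polyDl // lead_coefDl // s2 s1 l2 l1; split => //; exact: addnC.
Qed.

Lemma sm_neq0 p q : p != 0 -> q != 0 -> sm p q != 0.
Proof.
move=> np nq; rewrite -size_poly_gt0 (sm_size _ _ np nq).1.
have := size_poly_gt0 p; have := size_poly_gt0 q; rewrite np nq; lia.
Qed.

Lemma size_sm_le p q : (size (sm p q) <= (size p + size q).-1)%N.
Proof.
have [->|np] := eqVneq p 0; first by rewrite sm0l size_poly0.
have [->|nq] := eqVneq q 0; first by rewrite sm0r size_poly0.
by rewrite (sm_size _ _ np nq).1.
Qed.

Lemma size_sub_lt p r : p != 0 -> size r = size p -> lead_coef r = lead_coef p ->
  (size (p - r)%R < size p)%N.
Proof.
move=> np sr lr; have sp : (0 < size p)%N by rewrite size_poly_gt0.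
apply: (@leq_ltn_trans (size p).-1); last by lia.
apply/leq_sizeP => j hj; rewrite coefB.
have [e|ne] := eqVneq j (size p).-1.
  rewrite e; have -> : r`_((size p).-1) = lead_coef r by rewrite lead_coefE sr.
  by rewrite -lead_coefE lr subrr.
have hj' : (size p <= j)%N.
  by apply: (predn_lt sp); rewrite ltn_neqAle eq_sym ne.
by rewrite !nth_default ?subrr ?sr.
Qed.

Lemma srem_recP f n p : f \is monic -> (size p <= n)%N ->
  exists q, srem_rec sigma delta f n p = p - sm q f /\
            (size (srem_rec sigma delta f n p) < size f)%N.
Proof.
move=> mf; have nf := monic_neq0 mf.
have sf : (0 < size f)%N by rewrite size_poly_gt0.
elim: n p => [|n IH] p le /=.
  move: le; rewrite leqn0 size_poly_eq0 => /eqP ->.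
  by exists 0; rewrite sm0l subr0 size_poly0.
case: ifP => h; first by exists 0; rewrite sm0l subr0.
set c := lead_coef p; set k := (size p - size f)%N.
have hfp : (size f <= size p)%N by move: h => /negbT; rewrite -leqNgt.
have np : p != 0 by rewrite -size_poly_gt0; exact: leq_trans sf hfp.
have nc : c != 0 by rewrite lead_coef_eq0.
have [s1 l1] := size_iterT k _ nf.
have [s2 l2] := CmulP _ (iter k T f) nc.
have er : sm (c%:P * 'X^k) f = c%:P * iter k T f by rewrite sm_scalel sm_Xn.
have lt : (size (p - sm (c%:P * 'X^k) f)%R < size p)%N.
  apply: size_sub_lt => //; rewrite er ?s2 ?s1 ?l2 ?l1.
    by rewrite /k subnKC.
  by rewrite (monicP mf) iter_sigma1 mulr1.
have le' : (size (p - sm (c%:P * 'X^k) f)%R <= n)%N by rewrite -ltnS (leq_trans lt le).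
have [q' [e1 e2]] := IH _ le'.
exists (c%:P * 'X^k + q'); rewrite e1 sm_addl; split; first by rewrite opprD addrA.
by rewrite -e1.
Qed.


Local Notation rem := (srem sigma delta).

Lemma srem_spec f p : f \is monic ->
  exists q, rem f p = p - sm q f /\ (size (rem f p) < size f)%N.
Proof. by move=> mf; apply: srem_recP. Qed.

Lemma srem_lt f p : f \is monic -> (size (rem f p) < size f)%N.
Proof. by move=> mf; have [q [_ ?]] := srem_spec _ p mf. Qed.

Lemma srem_decomp f p : f \is monic -> exists q, p = sm q f + rem f p.
Proof.
move=> mf; have [q [e _]] := srem_spec _ p mf; exists q.
by rewrite e addrC subrK.
Qed.

Lemma le_pred_add (m n : nat) : (0 < m)%N -> (n <= (m + n).-1)%N.
Proof. lia. Qed.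
Arguments le_pred_add {m n}.

Lemma srem_uniq f q r : f \is monic -> (size r < size f)%N -> rem f (sm q f + r) = r.
Proof.
move=> mf sr; have [q' [e1 e2]] := srem_spec _ (sm q f + r) mf.
set s := rem f _ in e1 e2 *.
have E : sm (q - q') f = s - r by rewrite sm_subl e1 addrAC addrK.
have [hq|hq] := eqVneq (q - q') 0.
  by apply/eqP; rewrite -subr_eq0 -E hq sm0l.
exfalso.
have h1 : (size f <= size (sm (q - q') f))%N.
  rewrite (sm_size _ _ hq (monic_neq0 mf)).1; apply: le_pred_add.
  by rewrite size_poly_gt0.
have h2 : (size (s - r)%R < size f)%N.
  by apply: leq_ltn_trans (size_polyD _ _) _; rewrite size_polyN gtn_max e2 sr.
by rewrite E in h1; move: (leq_ltn_trans h1 h2); rewrite ltnn.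
Qed.

Lemma srem_small f r : f \is monic -> (size r < size f)%N -> rem f r = r.
Proof. by move=> mf sr; have := srem_uniq _ 0%R _ mf sr; rewrite sm0l add0r. Qed.

Lemma size0_lt f : f \is monic -> (size (0%R : {poly D}) < size f)%N.
Proof. by move=> mf; rewrite size_poly0 size_poly_gt0 monic_neq0. Qed.

Lemma srem0 f : f \is monic -> rem f 0 = 0.
Proof. by move=> mf; apply: srem_small => //; exact: size0_lt. Qed.

Lemma srem_mulf f q : f \is monic -> rem f (sm q f) = 0.
Proof. by move=> mf; have := srem_uniq _ q _ mf (size0_lt _ mf); rewrite addr0. Qed.

Lemma srem_add f x y : f \is monic -> rem f (x + y) = rem f x + rem f y.
Proof.
move=> mf; have [qx ex] := srem_decomp _ x mf; have [qy ey] := srem_decomp _ y mf.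
rewrite {1}ex {1}ey addrACA -sm_addl srem_uniq //.
by apply: leq_ltn_trans (size_polyD _ _) _; rewrite gtn_max !srem_lt.
Qed.

Lemma srem_modf f x q : f \is monic -> rem f (sm q f + x) = rem f x.
Proof. by move=> mf; rewrite srem_add // srem_mulf // add0r. Qed.

Lemma srem_scale f c x : f \is monic -> rem f (c%:P * x) = c%:P * rem f x.
Proof.
move=> mf; have [q e] := srem_decomp _ x mf.
rewrite {1}e mulrDr -sm_scalel srem_uniq //.
by apply: leq_ltn_trans (size_Cmul_le _ _) _; rewrite srem_lt.
Qed.

Lemma srem_opp f x : f \is monic -> rem f (- x) = - rem f x.
Proof.
by move=> mf; apply/eqP; rewrite -addr_eq0 -srem_add // addNr srem0.
Qed.

Lemma srem_sub f x y : f \is monic -> rem f (x - y) = rem f x - rem f y.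
Proof. by move=> mf; rewrite srem_add // srem_opp. Qed.

Lemma srem_sum f (I : Type) (r : seq I) (P : pred I) (F : I -> {poly D}) :
  f \is monic -> rem f (\sum_(i <- r | P i) F i) = \sum_(i <- r | P i) rem f (F i).
Proof.
by move=> mf; apply: (big_morph (rem f)) => [x y|]; rewrite ?srem_add ?srem0.
Qed.

Lemma srem_eq0 f x : f \is monic -> rem f x = 0 -> exists q, x = sm q f.
Proof. by move=> mf h; have [q e] := srem_decomp _ x mf; exists q; rewrite e h addr0. Qed.

Lemma pred_add_le (m n : nat) : (n <= 1)%N -> ((m + n).-1 <= m)%N.
Proof. lia. Qed.

Lemma size_smC_le p c : (size (sm p c%:P) <= size p)%N.
Proof. exact: leq_trans (size_sm_le _ _) (pred_add_le _ _ (size_polyC_leq1 c)). Qed.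

Lemma srem_semi f x b (e : D) : f \is monic -> sm f b%:P = sm e%:P f ->
  rem f (sm x b%:P) = sm (rem f x) b%:P.
Proof.
move=> mf hf; have [q ex] := srem_decomp _ x mf.
rewrite {1}ex sm_addl sm_assoc hf -sm_assoc srem_uniq //.
exact: leq_ltn_trans (size_smC_le _ _) (srem_lt _ _ mf).
Qed.

Lemma monic_norm d : d != 0 ->
  let c := ((lead_coef d : D)^-1) in
  c != 0 /\ (c%:P * d) \is monic /\ size (c%:P * d) = size d.
Proof.
move=> nd c; have ud : lead_coef d \is a GRing.unit by apply: Hdiv; rewrite lead_coef_eq0.
have nc : c != 0 by apply: unit_neq0; rewrite unitrV.
have [s l] := CmulP _ d nc.
by split => //; split => //; apply/monicP; rewrite l mulVr.
Qed.

Lemma monic_size1 d : d \is monic -> size d = 1%N -> d = 1.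
Proof.
move=> md sd; rewrite (size1_polyC (eq_leq sd)).
by have := monicP md; rewrite lead_coefE sd => ->.
Qed.

Lemma sdeg_lt p q : p != 0 -> (size p < size q)%N -> (sdeg p < sdeg q)%N.
Proof.
move=> np; rewrite /sdeg -size_poly_gt0 in np; move: np.
have H : forall m n : nat, (0 < m)%N -> (m < n)%N -> (m.-1 < n.-1)%N by move=> m n; lia.
exact: H.
Qed.

Lemma L_one f h : f \is monic ->
  ~ (exists g h, f = sm g h /\ (sdeg g < sdeg f)%N /\ (sdeg h < sdeg f)%N) ->
  h != 0 -> (size h < size f)%N ->
  exists p q, 1 = sm p h + sm q f.
Proof.
move=> mf Hirr nh sh.
suff: forall n d, (exists p q, d = sm p h + sm q f) -> d != 0 -> (size d <= n)%N ->
    exists p q, 1 = sm p h + sm q f.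
  move/(_ (size f) f); apply => //; last exact: monic_neq0.
  by exists 0, 1; rewrite sm0l add0r sm1l.
elim=> [|n IH] d [p [q ed]] nd sd.
  by move: sd; rewrite leqn0 size_poly_eq0 (negbTE nd).
have [nc [md' sd']] := monic_norm _ nd.
set c := ((lead_coef d : D)^-1) in nc md' sd'.
set d' := c%:P * d in md' sd'.
have ed' : d' = sm (c%:P * p) h + sm (c%:P * q) f by rewrite /d' ed mulrDr !sm_scalel.
have nd' := monic_neq0 md'.
have small : forall x, (size x < size d')%N -> (size x <= n)%N.
  by move=> x; rewrite sd' => hx; rewrite -ltnS (leq_trans hx sd).
have [Qf [ef _]] := srem_spec _ f md'.
have [rf0|rfn] := eqVneq (rem d' f) 0; last first.
  apply: (IH (rem d' f)) => //; last by apply: small; apply: srem_lt.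
  exists (- sm Qf (c%:P * p)), (1 - sm Qf (c%:P * q)).
  rewrite ef ed' sm_addr -!sm_assoc sm_oppl sm_subl sm1l.
  by rewrite opprD [RHS]addrCA.
have [Qh [eh _]] := srem_spec _ h md'.
have [rh0|rhn] := eqVneq (rem d' h) 0; last first.
  apply: (IH (rem d' h)) => //; last by apply: small; apply: srem_lt.
  exists (1 - sm Qh (c%:P * p)), (- sm Qh (c%:P * q)).
  rewrite eh ed' sm_addr -!sm_assoc sm_oppl sm_subl sm1l.
  by rewrite opprD addrA.
have Ef : f = sm Qf d' by apply/eqP; rewrite -subr_eq0 -ef rf0.
have Eh : h = sm Qh d' by apply/eqP; rewrite -subr_eq0 -eh rh0.
have [s1|s1] := eqVneq (size d') 1%N.
  by exists (c%:P * p), (c%:P * q); rewrite -ed' (monic_size1 _ md' s1).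
have nQf : Qf != 0 by apply: contraNneq (monic_neq0 mf) => e; rewrite Ef e sm0l.
have nQh : Qh != 0 by apply: contraNneq nh => e; rewrite Eh e sm0l.
have zf := (sm_size _ _ nQf nd').1; rewrite -Ef in zf.
have zh := (sm_size _ _ nQh nd').1; rewrite -Eh in zh.
have g1 : (0 < size Qf)%N by rewrite size_poly_gt0.
have g2 : (0 < size Qh)%N by rewrite size_poly_gt0.
have g3 : (0 < size d')%N by rewrite size_poly_gt0.
exfalso; apply: Hirr; exists Qf, d'; split => //; rewrite /sdeg.
move: sh s1 zf zh g1 g2 g3.
set a := size f; set a2 := size Qf; set a3 := size d'; set a4 := size h; set a5 := size Qh.
move=> sh s1 zf zh g1 g2 g3; move/eqP: s1 => s1.
lia.
Qed.


Lemma dep_left N (a : 'I_N.+1 -> 'I_N -> D) :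
  exists c : 'I_N.+1 -> D, (exists j, c j != 0) /\ (forall i, \sum_j c j * a j i = 0).
Proof.
have Kinv' : forall x : D^c, True -> x != 0 -> exists x' : D^c, True /\ x * x' = 1.
  move=> x _ nx; exists ((x : D)^-1); split => //.
  change (((x : D)^-1) * x = 1); apply: mulVr; exact: Hdiv.
have [c [_ [hj hs]]] := @dep_coord (D^c) (fun _ => True) I I (fun _ _ _ _ => I)
  (fun _ _ => I) (fun _ _ _ _ => I) Kinv' N a (fun _ _ => I).
by exists c; split => // i; exact: (hs i).
Qed.

Lemma polyC_sumD (I : Type) (r : seq I) (P : pred I) (F : I -> D) :
  (\sum_(i <- r | P i) F i)%:P = \sum_(i <- r | P i) (F i)%:P.
Proof. by apply: (big_morph polyC) => [x y|]; rewrite ?polyCD. Qed.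

Lemma poly_small s N : (size s <= N)%N -> s = \sum_(i < N) (s`_i)%:P * 'X^i.
Proof.
move=> sN; under eq_bigr do rewrite mul_polyC; rewrite -poly_def.
apply/polyP => k; rewrite coef_poly; case: ltnP => // hk.
by rewrite nth_default // (leq_trans sN hk).
Qed.

Lemma no_small_surj f h N : f \is monic -> (N.+1 < size f)%N ->
  (forall r, (size r < size f)%N -> exists s, (size s <= N)%N /\ rem f (sm s h) = r) ->
  False.
Proof.
move=> mf hN hs.
have hX : forall j : 'I_N.+1, (size ('X^j : {poly D}) < size f)%N.
  by move=> j; rewrite size_polyXn; exact: leq_ltn_trans (ltn_ord j) hN.
have [S HS] := @fin_all_exists _ (fun _ => {poly D})
    (fun (j : 'I_N.+1) s => (size s <= N)%N /\ rem f (sm s h) = 'X^j)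
    (fun j => hs _ (hX j)).
pose a := fun j (i : 'I_N) => (S j)`_i.
have [c [[j0 hj0] hc]] := dep_left N a.
pose U := fun i : nat => rem f (sm 'X^i h).
have ES : forall j : 'I_N.+1, 'X^j = \sum_(i < N) (a j i)%:P * U i.
  move=> j; rewrite -(HS j).2 {1}(poly_small _ _ (HS j).1) sm_suml srem_sum //.
  by apply: eq_bigr => i _; rewrite sm_scalel srem_scale.
have Z : \sum_(j < N.+1) (c j)%:P * 'X^j = 0.
  transitivity (\sum_(j < N.+1) \sum_(i < N) (c j * a j i)%:P * U i).
    apply: eq_bigr => j _; rewrite ES mulr_sumr; apply: eq_bigr => i _.
    by rewrite mulrA polyCM.
  rewrite exchange_big /= big1 // => i _.
  by rewrite -mulr_suml -polyC_sumD hc mul0r.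
move: (congr1 (fun p => p`_j0) Z); rewrite /= coef_sum coef0 (bigD1 j0) //=.
rewrite coefCM coefXn eqxx mulr1 big1 ?addr0; first by move/eqP; rewrite (negbTE hj0).
move=> j nj; rewrite coefCM coefXn.
have -> : (nat_of_ord j0 == nat_of_ord j) = false.
  by apply/negbTE; rewrite eq_sym.
by rewrite mulr0.
Qed.

Lemma nat_aux1 (a b c : nat) : (a < b)%N -> (b < c)%N -> (a <= c.-2)%N.
Proof. lia. Qed.
Lemma nat_aux2 (c : nat) : (1 < c)%N -> ((c.-2).+1 < c)%N.
Proof. lia. Qed.

Lemma nozero f g h : f \is monic -> (1 < size f)%N ->
  ~ (exists g h, f = sm g h /\ (sdeg g < sdeg f)%N /\ (sdeg h < sdeg f)%N) ->
  g != 0 -> h != 0 -> (size g < size f)%N -> (size h < size f)%N ->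
  rem f (sm g h) != 0.
Proof.
move=> mf s2 Hirr ng nh sg sh; apply/negP => /eqP z.
have [q eq] := srem_eq0 _ _ mf z.
have [p0 [b0 E1]] := L_one _ _ mf Hirr nh sh.
have [nc [mk sk]] := monic_norm _ ng.
set c := ((lead_coef g : D)^-1) in nc mk sk.
set k := c%:P * g in mk sk.
have Ak : sm k h = sm (c%:P * q) f by rewrite /k sm_scalel eq sm_scalel.
apply: (no_small_surj f h (size f).-2 mf (nat_aux2 _ s2)).
move=> r sr.
have [Qt et] := srem_decomp _ (sm r p0) mk.
exists (rem k (sm r p0)); split.
  by apply: (nat_aux1 _ _ _ (srem_lt _ _ mk)); rewrite sk.
set R := rem k (sm r p0) in et *.
have Er : r = sm (sm Qt (c%:P * q) + sm r b0) f + sm R h.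
  rewrite -{1}(sm1r r) E1 sm_addr -!sm_assoc et sm_addl sm_assoc Ak -sm_assoc.
  by rewrite sm_addl addrAC.
by rewrite -(srem_small _ _ mf sr) [in RHS]Er srem_modf.
Qed.


Lemma size_sum_le (I : Type) (r : seq I) (P : pred I) (F : I -> {poly D}) n :
  (forall i, P i -> (size (F i) <= n)%N) -> (size (\sum_(i <- r | P i) F i)%R <= n)%N.
Proof.
move=> H; apply: (big_ind (fun x => (size x <= n)%N)) => //.
  by rewrite size_poly0.
by move=> x y hx hy; apply: leq_trans (size_polyD _ _) _; rewrite geq_max hx hy.
Qed.

Lemma size_XnC_le i c : (size (sm 'X^i c%:P) <= i.+1)%N.
Proof.
rewrite sm_Xn; apply: leq_trans (size_iterT_le _ _) _.
by rewrite -add1n leq_add2r size_polyC_leq1.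
Qed.

Lemma bump_max m (i : 'I_m) : bump m i = i.
Proof. by rewrite /bump leqNgt ltn_ord add0n. Qed.

Lemma iter_sigma0 n : iter n sigma 0 = 0.
Proof. by elim: n => //= n ->; rewrite rmorph0. Qed.

Lemma rcoord (Hbij : bijective sigma) m x : (size x <= m)%N ->
  exists d : 'I_m -> D, x = \sum_(i < m) sm 'X^i (d i)%:P.
Proof.
case: Hbij => si s1 s2.
have iterK : forall k a, iter k sigma (iter k si a) = a.
  by elim=> [|k IH] a //; rewrite iterSr /= s2 IH.
elim: m x => [|m IH] x sx.
  exists (fun _ => 0); move: sx; rewrite leqn0 size_poly_eq0 => /eqP ->.
  by rewrite big_ord0.
suff H : forall w, (size (x - sm 'X^m w%:P)%R <= m)%N ->
    exists d : 'I_m.+1 -> D, x = \sum_(i < m.+1) sm 'X^i (d i)%:P.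
  case: (leqP (size x) m) => hx.
    by apply: (H 0); rewrite polyC0 sm0r subr0.
  have ex : size x = m.+1 by apply/eqP; rewrite eqn_leq sx hx.
  set a := lead_coef x.
  have nx : x != 0 by rewrite -size_poly_gt0 ex.
  have na : a != 0 by rewrite lead_coef_eq0.
  set w := iter m si a.
  have nw : w != 0 by apply: contraNneq na => e; rewrite /a -(iterK m (lead_coef x)) -/w e iter_sigma0.
  apply: (H w); rewrite -ltnS -ex; apply: size_sub_lt => //.
    have nwp : w%:P != 0 by rewrite polyC_eq0.
    by rewrite sm_Xn (size_iterT _ _ nwp).1 size_polyC nw add1n ex.
  have nwp : w%:P != 0 by rewrite polyC_eq0.
  by rewrite sm_Xn (size_iterT _ _ nwp).2 lead_coefC iterK.
move=> w hw; have [d ed] := IH _ hw.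
exists (fun i => match unlift ord_max i with Some i' => d i' | None => w end).
rewrite (bigD1_ord ord_max) //= unlift_none.
under eq_bigr do rewrite liftK bump_max.
by rewrite -ed addrC subrK.
Qed.

Lemma rcoord_indep m (d : 'I_m -> D) :
  \sum_(i < m) sm 'X^i (d i)%:P = 0 -> forall i, d i = 0.
Proof.
elim: m d => [|m IH] d; first by move=> _ [].
rewrite (bigD1_ord ord_max) //=.
under eq_bigr do rewrite bump_max.
set S := \sum_(i < m) _.
have sS : (size S <= m)%N.
  by apply: size_sum_le => i _; apply: leq_trans (size_XnC_le _ _) _.
move=> E.
have dm : d ord_max = 0.
  case: (eqVneq (d ord_max) 0) => // nd; exfalso.
  have nwp : (d ord_max)%:P != 0 by rewrite polyC_eq0.
  have st : size (sm 'X^m (d ord_max)%:P) = m.+1.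
    by rewrite sm_Xn (size_iterT _ _ nwp).1 size_polyC nd add1n.
  by have := congr1 (fun p : {poly D} => size p) E; rewrite /= size_poly0 size_polyDl st // ltnS.
move: E; rewrite dm polyC0 sm0r add0r => /IH hS i.
by case: (unliftP ord_max i) => [i' ->|->].
Qed.

Lemma coef_sum_ordX m (b : 'I_m -> D) (j : 'I_m) :
  (\sum_(i < m) (b i)%:P * 'X^i)`_j = b j.
Proof.
rewrite coef_sum (bigD1 j) //= coefCM coefXn eqxx mulr1 big1 ?addr0 //.
move=> i ni; rewrite coefCM coefXn.
have -> : (nat_of_ord j == nat_of_ord i) = false by apply/negbTE; rewrite eq_sym.
by rewrite mulr0.
Qed.

Lemma B_inv (B : {pred D}) : subring_closed B -> free_right_module_finite_rank B ->
  forall b, b \in B -> b != 0 -> b^-1 \in B.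
Proof.
move=> [B1 Bsub Bmul] [n [e [span indep]]] b Bb nb.
have ub := Hdiv _ nb.
case: n e span indep => [|n] e span indep.
  by have [c [_]] := span 1; rewrite big_ord0 => /eqP; rewrite oner_eq0.
have [c [Bc ec]] := span (e ord0 * b^-1).
have B0 : 0 \in B by rewrite -(subrr 1); apply: Bsub.
pose dl := fun i : 'I_n.+1 => c i * b - (i == ord0)%:R.
have Bdl : forall i, dl i \in B.
  move=> i; apply: Bsub; first exact: Bmul.
  by case: (i == ord0).
have Z : \sum_(i < n.+1) e i * dl i = 0.
  rewrite /dl; under eq_bigr do rewrite mulrBr mulrA.
  rewrite sumrB -mulr_suml -ec -mulrA mulVr // mulr1 big_ord_recl eqxx mulr1.
  rewrite big1 ?addr0 ?subrr // => i _.
  by have -> : (lift ord0 i == ord0) = false by []; rewrite mulr0.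
have := indep _ Bdl Z ord0; rewrite /dl eqxx => /eqP; rewrite subr_eq0 => /eqP h.
have -> : b^-1 = c ord0 by rewrite -(mulrK ub (c ord0)) h mul1r.
exact: Bc.
Qed.

Lemma sdeg_size p q : (sdeg p < sdeg q)%N -> (size p < size q)%N.
Proof. rewrite /sdeg; have H : forall a b : nat, (a.-1 < b.-1 -> a < b)%N by move=> a b; lia. exact: H. Qed.

Lemma nat_s2 (a : nat) : (2 <= a.-1)%N -> (2 < a)%N.
Proof. lia. Qed.
Lemma nat_pred_lt (a : nat) : (1 < a)%N -> (a.-1 < a)%N.
Proof. lia. Qed.
Lemma nat_unit (a b : nat) : 1%N = (a + b).-1 -> (2 < a)%N -> (0 < b)%N -> False.
Proof. lia. Qed.

Lemma part1 (Hbij : bijective sigma) (B : {pred D}) f :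
  subring_closed B -> free_right_module_finite_rank B -> f \is monic ->
  (2 <= sdeg f)%N -> weak_semi_invariant sigma delta B f ->
  (Sf_division sigma delta f <-> skew_irreducible sigma delta f).
Proof.
move=> HB Hfree mf s2 Hw.
have sf : (2 < size f)%N by apply: nat_s2.
have nf := monic_neq0 mf.
have sf1 : (1 < size f)%N by apply: ltnW.
split.
- move=> Hd; split.
    move=> [u [e1 _]].
    have nu : u != 0 by apply: contra_eq_neq e1 => ->; rewrite sm0r eq_sym oner_eq0.
    have := (sm_size _ _ nf nu).1; rewrite e1 size_poly1 => h.
    by apply: (nat_unit _ _ h sf); rewrite size_poly_gt0.
  move=> [g [h [ef [dg dh]]]].
  have ng : g != 0 by apply: contraNneq nf => e; rewrite ef e sm0l.
  have nh : h != 0 by apply: contraNneq nf => e; rewrite ef e sm0r.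
  have sg := sdeg_size _ _ dg; have sh := sdeg_size _ _ dh.
  have [h0 [_ U]] := (Hd g sg ng).1 0 (size0_lt _ mf).
  have e0 : h0 = 0 by apply: U; split; [exact: size0_lt | by rewrite /sf_mul sm0r srem0].
  have eh : h0 = h by apply: U; split => //; rewrite /sf_mul -ef -{2}(sm1l f) srem_mulf.
  by move: nh; rewrite -eh e0 eqxx.
- move=> [_ Hirr] g sg ng.
  have nzc : forall x, (size x < size f)%N -> x != 0 -> rem f (sm g x) != 0.
    by move=> x sx nx; apply: nozero.
  have nzc' : forall x, (size x < size f)%N -> x != 0 -> rem f (sm x g) != 0.
    by move=> x sx nx; apply: nozero.
  set m := (size f).-1.
  have mf' : (m < size f)%N by apply: nat_pred_lt.
  split.
  +
    case: Hfree => n [e [espan eindep]] //.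
    case: HB => B1 Bsub Bmul.
    have B0 : 0 \in B by rewrite -(subrr 1); apply: Bsub.
    have BN : forall a, a \in B -> - a \in B by move=> a Ba; rewrite -sub0r; apply: Bsub.
    have BD : forall a b, a \in B -> b \in B -> a + b \in B.
      by move=> a b Ba Bb; rewrite -(opprK b); apply: Bsub => //; apply: BN.
    have Binv : forall a, a \in B -> a != 0 -> exists a', a' \in B /\ a * a' = 1.
      move=> a Ba na; exists a^-1; split; last by rewrite mulrV //; apply: Hdiv.
      have HB' : subring_closed B by split.
      have Hf' : free_right_module_finite_rank B by exists n, e.
      exact: (B_inv B HB' Hf' a Ba na).
    pose u := fun ij : 'I_m * 'I_n => sm 'X^(ij.1) (e ij.2)%:P.
    have aDr : forall x b c, sm x (b + c)%:P = sm x b%:P + sm x c%:P.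
      by move=> x b c; rewrite polyCD sm_addr.
    have aM : forall x b c, sm x (b * c)%:P = sm (sm x b%:P) c%:P.
      by move=> x b c; rewrite polyCM -sm_Cl sm_assoc.
    have a1 : forall x, sm x 1%:P = x by move=> x; rewrite polyC1 sm1r.
    have Hs := @inj_surj D (fun b => b \in B) B0 B1 BD BN Bmul Binv {poly D}
      (fun x b => sm x b%:P)
      (fun x y b => sm_addl x y b%:P) aDr aM a1
      _ u (fun x => (size x < size f)%N) (fun x => rem f (sm g x)).
    have ex : forall r, (size r < size f)%N -> exists x, (size x < size f)%N /\ rem f (sm g x) = r.
      apply: Hs.
      * move=> x sx.
        have sxm : (size x <= m)%N by rewrite /m -ltnS prednK // (ltn_trans _ sf).
        have [d ed] := rcoord Hbij m x sxm.
        have [Bm HBm] := @fin_all_exists _ (fun _ => 'I_n -> D)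
          (fun (i : 'I_m) bi => (forall j, bi j \in B) /\ d i = \sum_j e j * bi j)
          (fun i => espan (d i)).
        exists (fun ij => Bm ij.1 ij.2); split; first by move=> [i j]; exact: (HBm i).1.
        transitivity (\sum_i \sum_j sm (u (i, j)) (Bm i j)%:P); last first.
          by rewrite pair_bigA; apply: eq_bigr => [[i j]] _.
        rewrite ed; apply: eq_bigr => i _; rewrite (HBm i).2 polyC_sumD sm_sumr.
        by apply: eq_bigr => j _; rewrite /u /= sm_assoc sm_Cl polyCM.
      * move=> b Bb Z.
        have Z' : \sum_(i < m) sm 'X^i (\sum_j e j * b (i, j))%:P = 0.
          transitivity (\sum_i \sum_j sm (u (i, j)) (b (i, j))%:P).
            apply: eq_bigr => i _; rewrite polyC_sumD sm_sumr.
            by apply: eq_bigr => j _; rewrite /u /= sm_assoc sm_Cl polyCM.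
          by rewrite pair_bigA; apply: etrans Z; apply: eq_bigr => [[i j]] _.
        move=> [i j]; have h := rcoord_indep _ _ Z' i.
        exact: (eindep (fun j => b (i, j)) (fun j => Bb (i, j)) h j).
      * move=> b Bb; apply: leq_ltn_trans mf'.
        apply: size_sum_le => [[i j]] _; rewrite /u /=.
        apply: leq_trans (size_smC_le _ _) _; apply: leq_trans (size_XnC_le _ _) _.
        exact: ltn_ord i.
      * by move=> x y; rewrite sm_addr srem_add.
      * move=> x b Bb; have [d hd] := Hw b Bb.
        by rewrite -sm_assoc (srem_semi _ _ _ _ mf hd).
      * by move=> i; apply: srem_lt.
      * move=> x sx hx; case: (eqVneq x 0) => // nx; exfalso.
        by move: (nzc x sx nx); rewrite hx eqxx.
    move=> r sr; have [x [sx ex']] := ex r sr; exists x; split; first by split.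
    move=> y [sy ey]; rewrite /sf_mul in ey.
    case: (eqVneq (x - y) 0) => [/eqP|hne]; first by rewrite subr_eq0 => /eqP.
    exfalso; have sxy : (size (x - y)%R < size f)%N.
      by apply: leq_ltn_trans (size_polyD _ _) _; rewrite size_polyN gtn_max sx; exact: sy.
    by move: (nzc _ sxy hne); rewrite sm_subr srem_sub // ex' ey subrr eqxx.
  +
    have Kinv' : forall x : D^c, True -> x != 0 -> exists x' : D^c, True /\ x * x' = 1.
      move=> x _ nx; exists ((x : D)^-1); split => //.
      change (((x : D)^-1) * x = 1); apply: mulVr; exact: Hdiv.
    pose act := fun (x : {poly D}) (b : D^c) => ((b : D)%:P * x).
    have aDl : forall x y (b : D^c), act (x + y) b = act x b + act y b.
      by move=> x y b; rewrite /act mulrDr.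
    have aDr : forall x (b c : D^c), act x (b + c) = act x b + act x c.
      by move=> x b c; rewrite /act -mulrDl -polyCD.
    have aM : forall x (b c : D^c), act x (b * c) = act (act x b) c.
      move=> x b c; rewrite /act.
      change (((c : D) * (b : D))%:P * x = (c : D)%:P * ((b : D)%:P * x)).
      by rewrite polyCM mulrA.
    have a1 : forall x, act x 1 = x by move=> x; rewrite /act polyC1 mul1r.
    have Hs := @inj_surj (D^c) (fun _ => True) I I (fun _ _ _ _ => I)
      (fun _ _ => I) (fun _ _ _ _ => I) Kinv' {poly D} act aDl aDr aM a1
      'I_m (fun i => 'X^i) (fun x => (size x < size f)%N) (fun x => rem f (sm x g)).
    have ex : forall r, (size r < size f)%N -> exists x, (size x < size f)%N /\ rem f (sm x g) = r.
      apply: Hs.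
      * move=> x sx.
        have sxm : (size x <= m)%N by rewrite /m -ltnS prednK // (ltn_trans _ sf).
        exists (fun i : 'I_m => (x`_i : D^c)); split => //.
        by rewrite {1}(poly_small _ _ sxm).
      * move=> b _ Z i; have := congr1 (fun p : {poly D} => p`_i) Z.
        by rewrite /= coef_sum_ordX coef0.
      * move=> b _; apply: leq_ltn_trans mf'.
        apply: size_sum_le => i _; rewrite /act.
        by apply: leq_trans (size_Cmul_le _ _) _; rewrite size_polyXn.
      * by move=> x y; rewrite sm_addl srem_add.
      * by move=> x b _; rewrite /act sm_scalel srem_scale.
      * by move=> i; apply: srem_lt.
      * move=> x sx hx; case: (eqVneq x 0) => // nx; exfalso.
        by move: (nzc' x sx nx); rewrite hx eqxx.
    move=> r sr; have [x [sx ex']] := ex r sr; exists x; split; first by split.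
    move=> y [sy ey]; rewrite /sf_mul in ey.
    case: (eqVneq (x - y) 0) => [/eqP|hne]; first by rewrite subr_eq0 => /eqP.
    exfalso; have sxy : (size (x - y)%R < size f)%N.
      by apply: leq_ltn_trans (size_polyD _ _) _; rewrite size_polyN gtn_max sx; exact: sy.
    by move: (nzc' _ sxy hne); rewrite sm_subl srem_sub // ex' ey subrr eqxx.
Qed.

End SkewTh.


Theorem mainTheorem9 (D : unitRingType) (sigma : {rmorphism D -> D}) (delta : D -> D) :
  division_ring D ->
  bijective sigma ->
  left_sigma_derivation sigma delta ->
  (forall (B : {pred D}) (f : {poly D}),
     subring_closed B ->
     free_right_module_finite_rank B ->
     f \is monic -> (2 <= sdeg f)%N ->
     weak_semi_invariant sigma delta B f ->
     (Sf_division sigma delta f <-> skew_irreducible sigma delta f)) /\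
  (forall f : {poly D},
     f \is monic -> (2 <= sdeg f)%N ->
     right_semi_invariant sigma delta f ->
     (Sf_division sigma delta f <-> skew_irreducible sigma delta f)).
Proof.
move=> Hdiv Hbij Hder; split.
  by move=> B f; apply: (@part1 _ _ _ Hdiv Hder Hbij).
move=> f mf s2 Hr.
apply: (@part1 _ _ _ Hdiv Hder Hbij (predT : {pred D})) => //.
- exists 1%N, (fun _ => 1); split.
    by move=> x; exists (fun _ => x); split => //; rewrite big_ord1 mul1r.
  by move=> b _; rewrite big_ord1 mul1r => h i; rewrite (ord1 i).
Qed.
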